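(* Let $\sigma\ge 2$, $k\ge 1$, let $U$ be any rotation of a $\sigma$-ary de Bruijn cycle of order $k$, and let $w_{\mathrm{lin}}=U\,U[0..k-2]$. Let $\chi$ be the size of a smallest suffixient set for $w_{\mathrm{lin}}\$$ and $r$ the number of runs of $\operatorname{BWT}(w_{\mathrm{lin}}\$)$. Then $$\frac{\chi}{r}<\frac{\sigma}{\sigma-1}.$$
   Context: A $\sigma$-ary de Bruijn cycle of order $k$ is a cyclic word of length $\sigma^k$ over an ordered alphabet $\Sigma$ of size $\sigma$ in which every word of $\Sigma^k$ occurs exactly once as a cyclic length-$k$ window. Strings are $0$-indexed; $v[0..j]$ is the prefix ending at position $j$. $\$\notin\Sigma$ is an end-marker smaller than all letters, appended once. $\operatorname{BWT}(v)$ is the last column of the matrix of lexicographically sorted cyclic rotations of $v$; a run is a maximal block of one repeated symbol. For a string $v$ over $\Sigma\cup\{\$\}$, a substring $x$ (possibly empty) is right-maximal if $xa,xb$ are substrings of $v$ for two distinct symbols $a\ne b$; these words $xa$ are the right-extensions of $v$. A set $S$ of positions of $v$ is suffixient if every right-extension of $v$ is a suffix of $v[0..j]$ for some $j\in S$. *)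

(* Defs.v *)
From HB Require Import structures.
From mathcomp Require Import all_boot all_order all_algebra.
Set Implicit Arguments. Unset Strict Implicit. Unset Printing Implicit Defensive.

(* Alphabet Sigma = {0, ..., sigma-1} (as nat, natural order).
   Strings over Sigma ∪ {$} are encoded as seq nat with $ := 0 and
   letter a := a.+1 (order preserving, $ smallest). *)

Definition cyc_window (U : seq nat) (k i : nat) : seq nat :=
  [seq nth 0 U ((i + j) %% size U) | j <- iota 0 k].

Definition de_bruijn_cycle (sigma k : nat) (U : seq nat) : Prop :=
  size U = sigma ^ k /\ all (fun a => a < sigma) U /\
  forall x : seq nat, size x = k -> all (fun a => a < sigma) x ->
    count (fun i => cyc_window U k i == x) (iota 0 (size U)) = 1.

Definition dollar (w : seq nat) : seq nat := rcons (map S w) 0.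

Fixpoint lexle (s t : seq nat) : bool :=
  match s, t with
  | [::], _ => true
  | _ :: _, [::] => false
  | x :: s', y :: t' => (x < y) || ((x == y) && lexle s' t')
  end.

Definition bwt (v : seq nat) : seq nat :=
  [seq last 0 r | r <- sort lexle [seq rot i v | i <- iota 0 (size v)]].

Fixpoint runs (s : seq nat) : nat :=
  match s with
  | [::] => 0
  | x :: s' => match s' with
               | [::] => 1
               | y :: _ => (x != y) + runs s'
               end
  end.

Definition right_extension (v y : seq nat) : Prop :=
  exists x a, y = rcons x a /\ infix (rcons x a) v /\
    exists2 b, b != a & infix (rcons x b) v.

Definition suffixient (v : seq nat) (S : {set 'I_(size v)}) : Prop :=
  forall y, right_extension v y ->
    exists2 j : 'I_(size v), j \in S & suffix y (take j.+1 v).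

Definition smallest_suffixient_size (v : seq nat) (chi : nat) : Prop :=
  (exists S : {set 'I_(size v)}, suffixient S /\ #|S| = chi) /\
  (forall S : {set 'I_(size v)}, suffixient S -> chi <= #|S|).

(* Main.v *)
Require Import Defs.
From HB Require Import structures.
From mathcomp Require Import all_boot all_order all_algebra.
From mathcomp Require Import zify.
Import Order.TTheory GRing.Theory Num.Theory.

Lemma nth_rot (T : Type) (x0 : T) (s : seq T) i t :
  i < size s -> t < size s -> nth x0 (rot i s) t = nth x0 s ((i + t) %% size s).
Proof.
move=> hi ht; rewrite /rot nth_cat size_drop.
case: ltnP => h.
  by rewrite nth_drop modn_small //; lia.
rewrite nth_take; last by lia.
have -> : i + t = (i + t - size s) + size s by lia.
rewrite modnDr modn_small; last by lia.
congr nth; lia.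
Qed.

Fixpoint runsT (T : eqType) (s : seq T) : nat :=
  match s with
  | [::] => 0
  | x :: s' => match s' with
               | [::] => 1
               | y :: _ => (x != y) + runsT _ s'
               end
  end.
Arguments runsT {T} s.

Lemma runsE s : runs s = runsT s.
Proof. by elim: s => // x [|y t] //= ->. Qed.

Lemma runsT_pair (A : Type) (T1 T2 : eqType) (f : A -> T1) (g : A -> T2) (L : seq A) :
  runsT [seq (f x, g x) | x <- L] + (size L != 0) <= runsT (map g L) + runsT (map f L).
Proof.
elim: L => // x [|y t] IH //=.
move: IH => /=; rewrite xpair_eqE.
case: (f x =P f y); case: (g x =P g y) => /= _ _; lia.
Qed.

Lemma runsT_undup (T : eqType) (s : seq T) : size (undup s) <= runsT s.
Proof.
elim: s => // x s IH; case: s IH => [|y t] IH //.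
have -> : runsT (x :: y :: t) = (x != y) + runsT (y :: t) by [].
have -> : undup (x :: y :: t) = if x \in y :: t then undup (y :: t) else x :: undup (y :: t) by [].
case: (x =P y) => [->|/eqP/negbTE hne]; first by rewrite mem_head.
move: (undup (y :: t)) (runsT (y :: t)) IH => a b IH.
case: ifP => _ /=; lia.
Qed.

Fixpoint lexle_refl s : lexle s s.
Proof. case: s => //= x s; by rewrite eqxx lexle_refl orbT. Qed.

Lemma lexle_anti s t : lexle s t -> lexle t s -> s = t.
Proof.
elim: s t => [|x s IH] [|y t] //=.
case: (ltngtP x y) => //= -> /IH h /h ->; done.
Qed.

Lemma lexle_trans : transitive lexle.
Proof.
move=> t s u; elim: s t u => [|x s IH] [|y t] [|z u] //=.
move=> /orP[h1|/andP[/eqP h1 h1']] /orP[h2|/andP[/eqP h2 h2']].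
- by rewrite (ltn_trans h1 h2).
- by rewrite -h2 h1.
- by rewrite h1 h2.
- by rewrite h1 -h2 eqxx (IH _ _ h1' h2') orbT.
Qed.

Lemma lexle_total : total lexle.
Proof.
move=> s; elim: s => [|x s IH] [|y t] //=.
case: (ltngtP x y) => //= ->; rewrite eqxx /=; exact: IH.
Qed.

Lemma lexle_take m s t : lexle s t -> lexle (take m s) (take m t).
Proof.
elim: s t m => [|x s IH] [|y t] [|m] //=.
case/orP => [->//|/andP[/eqP -> h]]; by rewrite eqxx IH ?orbT.
Qed.

Lemma runsT_sorted (s : seq (seq nat)) : sorted lexle s -> runsT s <= size (undup s).
Proof.
elim: s => // x s IH; case: s IH => [|y t] IH // /andP[hxy hp].
have {}IH := IH hp.
have -> : runsT (x :: y :: t) = (x != y) + runsT (y :: t) by [].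
have -> : undup (x :: y :: t) = if x \in y :: t then undup (y :: t) else x :: undup (y :: t) by [].
case: (x =P y) => [->|hne]; first by rewrite mem_head.
have -> : (x \in y :: t) = false.
  apply/negbTE/negP; rewrite in_cons => /orP[/eqP //|hx].
  have := order_path_min lexle_trans hp => /allP /(_ _ hx) hyx.
  by apply: hne; apply: lexle_anti.
move: (undup (y :: t)) (runsT (y :: t)) IH => a b IH /=; by rewrite add1n ltnS.
Qed.

Lemma perm_size_undup (T : eqType) (s t : seq T) : perm_eq s t -> size (undup s) = size (undup t).
Proof.
move=> h; apply: perm_size; apply: perm_undup; exact: perm_mem.
Qed.

Lemma undup_split (T : eqType) (a : pred T) (s : seq T) :
  size (undup s) = size (undup (filter a s)) + size (undup (filter (predC a) s)).
Proof. by rewrite -!filter_undup !size_filter count_predC. Qed.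

Lemma undup_map_le (A B : eqType) (h : A -> B) (s : seq A) :
  size (undup (map h s)) <= size (undup s).
Proof.
rewrite -(size_map h (undup s)); apply: uniq_leq_size; first exact: undup_uniq.
move=> z; rewrite mem_undup => /mapP[x hx ->]; apply: map_f; by rewrite mem_undup.
Qed.

Lemma undup_card (A : eqType) (T : finType) (h : A -> T) (s : seq A) :
  {in s &, injective h} -> size (undup s) <= #|T|.
Proof.
move=> hi; rewrite -(size_map h (undup s)).
have hu : uniq (map h (undup s)).
  rewrite map_inj_in_uniq ?undup_uniq //.
  by move=> x y; rewrite !mem_undup; apply: hi.
by rewrite -(card_uniqP hu) max_card.
Qed.

Lemma size_window (U : seq nat) k i : size (cyc_window U k i) = k.
Proof. by rewrite /cyc_window size_map size_iota. Qed.

Lemma nth_window (U : seq nat) k i t : t < k -> nth 0 (cyc_window U k i) t = nth 0 U ((i + t) %% size U).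
Proof. by move=> ht; rewrite /cyc_window (nth_map 0) ?size_iota // nth_iota. Qed.

Lemma size_wlin (U : seq nat) k : k <= size U -> size (U ++ take k.-1 U) = size U + k.-1.
Proof. by move=> hk; rewrite size_cat size_takel //; lia. Qed.

Lemma wlin_nth (U : seq nat) k x : k <= size U -> x < size U + k.-1 ->
  nth 0 (U ++ take k.-1 U) x = nth 0 U (x %% size U).
Proof.
move=> hk hx; rewrite nth_cat; case: ltnP => h.
  by rewrite modn_small.
rewrite nth_take; last by lia.
have -> : x = (x - size U) + size U by lia.
rewrite modnDr modn_small; last by lia.
congr nth; lia.
Qed.

Lemma window_take (U : seq nat) k i : k <= size U -> i < size U ->
  take k (drop i (U ++ take k.-1 U)) = cyc_window U k i.
Proof.
move=> hk hi; apply: (@eq_from_nth _ 0).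
  rewrite size_window size_take size_drop size_wlin //.
  case: ifPn => // h; lia.
move=> t; rewrite size_take size_drop size_wlin // => ht.
have htk : t < k by move: ht; case: ifPn => h; lia.
rewrite nth_take // nth_drop nth_window // wlin_nth //; lia.
Qed.

Lemma window_rot (V : seq nat) n k i : n < size V ->
  cyc_window (rot n V) k i = cyc_window V k ((i + n) %% size V).
Proof.
move=> hn; rewrite /cyc_window; apply: eq_map => j.
have hV : 0 < size V by lia.
rewrite nth_rot ?ltn_pmod // size_rot.
  by rewrite modnDmr modnDml; congr (nth _ _ (_ %% _)); lia.
exact: ltn_pmod.
Qed.

Lemma count_two (p : pred nat) m a b : a < m -> b < m -> a != b -> p a -> p b ->
  1 < count p (iota 0 m).
Proof.
move=> ha hb hab pa pb; rewrite -size_filter.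
have : size [:: a; b] <= size (filter p (iota 0 m)).
  apply: uniq_leq_size; first by rewrite /= in_cons orbF hab.
  by move=> x; rewrite !in_cons orbF mem_filter mem_iota => /orP[]/eqP->; 
     rewrite ?pa ?pb /=; lia.
by [].
Qed.

Lemma db_exists sigma k (V : seq nat) n (z : seq nat) : de_bruijn_cycle sigma k V -> n < size V ->
  size z = k -> all (fun a => a < sigma) z ->
  exists2 i, i < size V & cyc_window (rot n V) k i = z.
Proof.
move=> [hs [ha hc]] hn hz hza.
have hc1 := hc z hz hza.
have [t ht htz] : exists2 t, t < size V & cyc_window V k t == z.
  have : 0 < count (fun i => cyc_window V k i == z) (iota 0 (size V)) by rewrite hc1.
  rewrite -has_count => /hasP[t]; rewrite mem_iota => /andP[_ ht] h.
  by exists t.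
set M := size V.
exists ((t + (M - n)) %% M); first by rewrite ltn_pmod //; lia.
rewrite window_rot // modnDml.
have -> : t + (M - n) + n = t + M by lia.
by rewrite modnDr modn_small //; apply/eqP.
Qed.

Lemma db_uniq sigma k (V : seq nat) n i j : de_bruijn_cycle sigma k V -> n < size V ->
  i < size V -> j < size V ->
  cyc_window (rot n V) k i = cyc_window (rot n V) k j -> i = j.
Proof.
move=> [hs [ha hc]] hn hi hj; rewrite !window_rot //; set M := size V => h.
have hM : 0 < M by lia.
set i' := (i + n) %% M; set j' := (j + n) %% M.
have hw : size (cyc_window V k i') = k by rewrite size_window.
have hwa : all (fun a => a < sigma) (cyc_window V k i').
  apply/allP => x /mapP[y _ ->]; apply: (allP ha); apply: mem_nth; exact: ltn_pmod.
have hij : i' = j'.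
  apply/eqP; apply/negPn/negP => hne.
  have := hc _ hw hwa.
  have := @count_two (fun t => cyc_window V k t == cyc_window V k i') M i' j'.
  rewrite !ltn_pmod // eqxx h eqxx => /(_ isT isT hne isT isT) h1 h2; move: h1; rewrite /M h2 ltnn //.
have e : forall x, x < M -> x = ((x + n) %% M + (M - n)) %% M.
  move=> x hx; rewrite modnDml.
  have -> : x + n + (M - n) = x + M by lia.
  by rewrite modnDr modn_small.
have := congr1 (fun x => (x + (M - n)) %% M) hij; rewrite /= /i' /j' -(e i hi) -(e j hj) //.
Qed.
Lemma card_ge N m : #|[set j : 'I_N | m <= j]| <= N - m.
Proof.
rewrite cardsE cardE /enum_mem size_filter -enumT.
rewrite -(count_map val (fun j => m <= j)) val_enum_ord.
have c0 : forall p, p <= m -> count (leq m) (iota 0 p) = 0.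
  move=> p hp; apply/eqP; rewrite -leqn0 leqNgt -has_count; apply/hasPn => x.
  rewrite mem_iota /=; lia.
case: (leqP m N) => h.
  have -> : N = m + (N - m) by lia.
  rewrite iotaD count_cat c0 // add0n.
  apply: leq_trans (count_size _ _) _; rewrite size_iota; lia.
rewrite c0 //; lia.
Qed.

Lemma pred_lt a b c : 0 < b -> (a + b).-1 < a + (b + c).
Proof. lia. Qed.

Lemma chi_bound sigma k (U : seq nat) chi :
  0 < sigma -> 1 <= k -> k <= size U ->
  all (fun a => a < sigma) U ->
  (forall z, size z = k -> all (fun a => a < sigma) z ->
     exists2 i, i < size U & cyc_window U k i = z) ->
  smallest_suffixient_size (dollar (U ++ take k.-1 U)) chi -> chi <= size U + 1.
Proof.
move=> hs hk hkU ha hex [_ hmin].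
set w := U ++ take k.-1 U; set v := dollar w.
have hw : size w = size U + k.-1 := size_wlin U k hkU.
have hv : size v = size U + k by rewrite /v /dollar size_rcons size_map hw; lia.
have hvw : v = map S w ++ [:: 0] by rewrite /v /dollar cats1.
set Sx := [set j : 'I_(size v) | k.-1 <= j].
suff hS : suffixient Sx.
  apply: leq_trans (hmin Sx hS) _; apply: leq_trans (card_ge _ _) _; rewrite hv; lia.
move=> y [x [a [hy [hin _]]]].
have hy0 : 0 < size y by rewrite hy size_rcons.
move/infixP: hin; rewrite -hy => -[s1 [s2 hv12]].
case: (leqP k (size s1 + size y)) => hl.
  have hj : (size s1 + size y).-1 < size v.
    by rewrite hv12 !size_cat; exact: pred_lt.
  exists (Ordinal hj); first by rewrite inE /=; move: hl; set l1 := size s1; set ly := size y; lia.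
  rewrite /= prednK; last by set ly := size y in hl hy0 *; lia.
  rewrite hv12 catA -size_cat take_size_cat //.
  by apply/suffixP; exists s1.
set L := size s1 + size y.
have hpre : s1 ++ y = map S (take L U).
  have : take L v = s1 ++ y by rewrite hv12 catA take_size_cat // size_cat.
  rewrite hvw takel_cat ?size_map ?hw; last lia.
  rewrite -map_take /w takel_cat; last lia.
  by move=> <-.
set z := nseq (k - L) 0 ++ take L U.
have hz : size z = k by rewrite size_cat size_nseq size_takel; lia.
have hza : all (fun a => a < sigma) z.
  rewrite all_cat all_nseq hs orbT /=; apply/allP => q /mem_take hq; exact: (allP ha).
have [i hi hwin] := hex z hz hza.
have hj : (i + k).-1 < size v by rewrite hv; lia.
exists (Ordinal hj); first by rewrite inE /=; lia.
rewrite /= prednK; last lia.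
rewrite hvw takel_cat ?size_map ?hw; last lia.
rewrite -map_take takeD window_take // hwin /z map_cat map_cat -hpre.
by apply/suffixP; exists (map S (take i w) ++ map S (nseq (k - L) 0) ++ s1); rewrite !catA.
Qed.

Definition wl (U : seq nat) k := U ++ take k.-1 U.
Definition vv (U : seq nat) k := dollar (wl U k).

Lemma size_vv (U : seq nat) k : 0 < k -> k <= size U -> size (vv U k) = size U + k.
Proof. by move=> hk hkU; rewrite /vv /dollar size_rcons size_map size_wlin //; lia. Qed.

Lemma nth_vv_w (U : seq nat) k x : k <= size U -> x < size U + k.-1 ->
  nth 0 (vv U k) x = (nth 0 (wl U k) x).+1.
Proof.
move=> hkU hx; rewrite /vv /dollar -cats1 nth_cat size_map /wl size_wlin // hx.
by rewrite (nth_map 0) // size_wlin.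
Qed.

Lemma nth_vv_last (U : seq nat) k : 0 < k -> k <= size U -> nth 0 (vv U k) (size U + k).-1 = 0.
Proof.
move=> hk hkU; rewrite /vv /dollar -cats1 nth_cat size_map /wl size_wlin //.
have -> : (size U + k).-1 < size U + k.-1 = false by lia.
by have -> : (size U + k).-1 - (size U + k.-1) = 0 by lia.
Qed.

Lemma key_nth (U : seq nat) k i t : 0 < k -> k <= size U -> i < size U -> t < k.-1 ->
  nth 0 (take k.-1 (rot i (vv U k))) t = (nth 0 (wl U k) (i + t)).+1.
Proof.
move=> hk hkU hi ht; rewrite nth_take // nth_rot size_vv //; try lia.
rewrite modn_small; last lia.
by rewrite nth_vv_w //; lia.
Qed.

Lemma last_rot (U : seq nat) k i : 0 < k -> k <= size U -> i < size U ->
  last 0 (rot i (vv U k)) = if i == 0 then 0 else (nth 0 (wl U k) i.-1).+1.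
Proof.
move=> hk hkU hi; rewrite -nth_last size_rot size_vv // nth_rot size_vv //; try lia.
case: (i =P 0) => [->|hi0].
  by rewrite add0n modn_small ?nth_vv_last //; lia.
have -> : i + (size U + k).-1 = i.-1 + (size U + k) by lia.
rewrite modnDr modn_small; last lia.
by rewrite nth_vv_w //; lia.
Qed.

Lemma vv_le sigma (U : seq nat) k x : all (fun a => a < sigma) U -> x \in vv U k -> x <= sigma.
Proof.
move=> ha; rewrite /vv /dollar mem_rcons in_cons => /orP[/eqP -> //|/mapP[y hy ->]].
move: hy; rewrite /wl mem_cat => /orP[|/mem_take] hy; exact: (allP ha).
Qed.

Lemma runs_bound s k (U : seq nat) :
  0 < k -> k < size U -> all (fun a => a < s.+1) U ->
  (forall i j, i < size U -> j < size U -> cyc_window U k i = cyc_window U k j -> i = j) ->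
  size U + 1 <= runs (bwt (vv U k)) + s.+1 ^ k.-1.
Proof.
move=> hk hkU ha hun.
have hkU' : k <= size U by lia.
set v := vv U k; set N := size v.
have hN : N = size U + k by rewrite /N /v size_vv.
have hN2 : size v = size U + k by [].

set R := [seq rot i v | i <- iota 0 N].
set f := take k.-1 : seq nat -> seq nat.
set g := last 0 : seq nat -> nat.
set L := sort lexle R.
have hb : bwt v = map g L by [].
rewrite hb runsE.
have h1 := @runsT_pair _ _ _ f g L.
have hL : size L != 0 by rewrite size_sort size_map size_iota hN; lia.
rewrite hL addn1 in h1.
have h2 := @runsT_undup _ [seq (f x, g x) | x <- L].
have h3 : runsT (map f L) <= size (undup (map f L)).
  apply: runsT_sorted; apply: homo_sorted; first by move=> x y; apply: lexle_take.
  exact: sort_sorted lexle_total R.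
set P := [seq (f x, g x) | x <- R].
set K := map f R.
have eP : size (undup [seq (f x, g x) | x <- L]) = size (undup P).
  by apply: perm_size_undup; apply: perm_map; rewrite perm_sort.
have eK : size (undup (map f L)) = size (undup K).
  by apply: perm_size_undup; apply: perm_map; rewrite perm_sort.
set a := fun p : seq nat * nat => 0 \in p.1.
set a' := fun q : seq nat => 0 \in q.
have hP := @undup_split _ a P.
have hK := @undup_split _ a' K.
have hA : size (undup (filter a' K)) <= size (undup (filter a P)).
  have -> : K = map fst P by rewrite /K /P -map_comp.
  by rewrite filter_map; apply: undup_map_le.
have hB : size (undup (filter (predC a') K)) <= s.+1 ^ k.-1.
  have facts : forall q, ~~ a' q -> q \in K ->
      size q = k.-1 /\ (forall t, t < k.-1 -> 0 < nth 0 q t <= s.+1).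
    move=> q nq hq; move: nq; case/mapP: hq => r /mapP[i hi ->] -> nq; split.
      by rewrite /f size_takel // size_rot hN2; lia.
    move=> t ht; apply/andP; split.
      rewrite lt0n; apply/negP => /eqP h0; move/negP: nq; apply.
      by rewrite /a' -h0; apply: mem_nth; rewrite /f size_takel // size_rot hN2; lia.
    apply: (@vv_le _ _ k _ ha); rewrite -/v -(mem_rot i); apply: mem_take.
    by apply: mem_nth; rewrite /f size_takel // size_rot hN2; lia.
  pose h := fun q : seq nat => [ffun t : 'I_(k.-1) => (inord (nth 0 q t).-1 : 'I_s.+1)].
  apply: leq_trans (@undup_card _ {ffun 'I_k.-1 -> 'I_s.+1} h _ _) _; last first.
    by rewrite card_ffun !card_ord.
  move=> q1 q2; rewrite !mem_filter => /andP[n1 m1] /andP[n2 m2] e.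
  have [sz1 hq1] := facts q1 n1 m1.
  have [sz2 hq2] := facts q2 n2 m2.
  apply: (@eq_from_nth _ 0); first by rewrite sz1 sz2.
  move=> t ht; have {ht} ht : t < k.-1 := leq_trans ht (eq_leq sz1).
  have := congr1 (fun F : {ffun 'I_k.-1 -> 'I_s.+1} => val (F (Ordinal ht))) e; rewrite /h !ffunE /= !inordK.
  - have := hq1 _ ht; have := hq2 _ ht; lia.
  - have := hq2 _ ht; lia.
  - have := hq1 _ ht; lia.
have hC : size U <= size (undup (filter (predC a) P)).
  set Q := [seq (f (rot i v), g (rot i v)) | i <- iota 0 (size U)].
  have hQu : uniq Q.
    rewrite map_inj_in_uniq ?iota_uniq //.
    move=> i j; rewrite !mem_iota !add0n => /andP[_ hi] /andP[_ hj] [ek el].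
    rewrite /g !last_rot // in el.
    case: (i =P 0) el => [->|hi0]; case: (j =P 0) => [->|hj0] //= el.
    have hw : cyc_window U k i.-1 = cyc_window U k j.-1.
      apply: (@eq_from_nth _ 0); rewrite ?size_window // => t ht.
      rewrite !nth_window //.
      rewrite -(@wlin_nth U k (i.-1 + t)) ?hkU' //; last lia.
      rewrite -(@wlin_nth U k (j.-1 + t)) ?hkU' //; last lia.
      case: t ht => [|t] ht.
        by rewrite !addn0; case: el.
      have := congr1 (fun q => nth 0 q t) ek; rewrite /f !key_nth //; try lia.
      have -> : i.-1 + t.+1 = i + t by lia.
      have -> : j.-1 + t.+1 = j + t by lia.
      by case.
    have := hun _ _ _ _ hw; lia.
  have : size Q <= size (undup (filter (predC a) P)).
    apply: uniq_leq_size hQu _ => x /mapP[i]; rewrite mem_iota add0n => /andP[_ hi] ->.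
    rewrite mem_undup mem_filter; apply/andP; split.
      rewrite /= /a /=; apply/negP => /(nthP 0) [t].
      rewrite /f size_takel ?size_rot ?hN2 => [ht|]; last lia.
      by rewrite key_nth.
    apply: (map_f (fun x => (f x, g x))); apply: map_f; rewrite mem_iota; lia.
  by rewrite size_map size_iota.
move: h1 h2 h3 eP eK hP hK hA hB hC.
set X1 := runsT [seq (f x, g x) | x <- L]; set X2 := runsT (map g L); set X3 := runsT (map f L).
set Y1 := size (undup [seq (f x, g x) | x <- L]); set Y2 := size (undup (map f L)).
set Z1 := size (undup P); set Z2 := size (undup K).
set W1 := size (undup [seq x <- K | a' x]); set W2 := size (undup [seq x <- P | a x]).
set W3 := size (undup [seq x <- K | predC a' x]); set W4 := size (undup [seq x <- P | predC a x]).
lia.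
Qed.

Lemma final_arith sigma k chi r : 2 <= sigma -> 1 <= k ->
  chi <= sigma ^ k + 1 -> sigma ^ k + 1 <= r + sigma ^ k.-1 ->
  ((chi%:R / r%:R : rat) < sigma%:R / (sigma.-1)%:R)%R.
Proof.
move=> hs hk hc hr.
have ek : sigma ^ k = sigma * sigma ^ k.-1 by rewrite -expnS prednK.
set P := sigma ^ k.-1 in ek hr.
rewrite ek in hc hr.
have hP : 0 < P by rewrite expn_gt0; lia.
have hr0 : 0 < r by nia.
have key : chi * sigma.-1 < sigma * r by nia.
rewrite ltr_pdivrMr ?ltr0n // mulrAC ltr_pdivlMr ?ltr0n; last lia.
by rewrite -!natrM ltr_nat.
Qed.

Theorem theorem4 (sigma k : nat) (V : seq nat) (n : nat) (chi : nat) :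
  2 <= sigma -> 1 <= k ->
  de_bruijn_cycle sigma k V ->
  let U := rot n V in
  let wlin := U ++ take k.-1 U in
  smallest_suffixient_size (dollar wlin) chi ->
  ((chi%:R / (runs (bwt (dollar wlin)))%:R : rat) < sigma%:R / (sigma.-1)%:R)%R.
Proof.
move=> hs hk hdb U wlin hsm.
have hdb' := hdb; case: hdb' => [hM [ha _]].
set M := size V in hM.
have hkM : k < M by rewrite hM ltn_expl.
set n0 := if n < M then n else 0.
have hn0 : n0 < M by rewrite /n0; case: ifP => //; lia.
have hrot : U = rot n0 V.
  rewrite /U /n0; case: ifP => // /negbT; rewrite -leqNgt => h.
  by rewrite rot0 rot_oversize.
have hUs : size U = M by rewrite /U size_rot.
have haU : all (fun a => a < sigma) U.
  by apply/allP => x; rewrite /U mem_rot => hx; apply: (allP ha).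
have hex : forall z, size z = k -> all (fun a => a < sigma) z ->
     exists2 i, i < size U & cyc_window U k i = z.
  move=> z hz hza; have [i hi hw] := @db_exists sigma k V n0 z hdb hn0 hz hza.
  by exists i; rewrite ?hUs // hrot.
have hun : forall i j, i < size U -> j < size U -> cyc_window U k i = cyc_window U k j -> i = j.
  move=> i j; rewrite hUs hrot => hi hj; exact: (@db_uniq sigma k V n0 i j hdb hn0 hi hj).
have hc : chi <= size U + 1.
  apply: (@chi_bound sigma k U chi) => //; lia.
have hr : size U + 1 <= runs (bwt (vv U k)) + sigma.-1.+1 ^ k.-1.
  apply: runs_bound => //; first lia.
  by rewrite prednK //; lia.
rewrite prednK in hr; last lia.
apply: (@final_arith sigma k chi (runs (bwt (dollar wlin)))) => //; rewrite -hM -hUs //.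
Qed.
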